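(* Let $a,b,c,d,e\in\mathbb{Z}$ all be nonzero, with $a\equiv 0$, $b\equiv -1$, $c\equiv d\equiv 1$, $e\equiv 4\pmod 7$, and let $W\subset(\mathbb{P}^1)^3$ be the smooth, non-degenerate Markoff-type K3 surface over $\mathbb{Q}$ defined by the $(2,2,2)$-form with affine equation $$ax^2y^2z^2 + b(x^2y^2+x^2z^2+y^2z^2) + cxyz + d(x^2+y^2+z^2) + e = 0.$$ Let $U = W\setminus\{rst=0\}$ and $\mathcal{U}$ the integral model of $U$ over $\mathbb{Z}$ defined by the same equation. Then $\mathcal{U}(\mathbb{Z})$ is not Zariski-dense in $U$.
   Context: Coordinates on $(\mathbb{P}^1)^3$ are $([x:r],[y:s],[z:t])$ and the surface is the zero locus of the degree-$(2,2,2)$ bihomogenization. For a form of this shape, non-degenerate means $c\neq 0$, $be\neq d^2$ and $ad\neq b^2$ (equivalently, the projections $\pi_{ij}:W\to\mathbb{P}^1\times\mathbb{P}^1$ to pairs of factors are quasi-finite). $\mathcal{U}(\mathbb{Z})$ is the set of integer solutions $(x,y,z)\in\mathbb{Z}^3$. *)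

(* Defs.v *)
From HB Require Import structures.
From mathcomp Require Import all_boot all_order all_algebra all_field.
From mathcomp Require Import mpoly.
Set Implicit Arguments. Unset Strict Implicit. Unset Printing Implicit Defensive.
Import Order.TTheory GRing.Theory Num.Theory.
Local Open Scope ring_scope.

Definition affF (R : comNzRingType) (a b c d e : int) (x y z : R) : R :=
  a%:~R * x^+2 * y^+2 * z^+2
  + b%:~R * (x^+2 * y^+2 + x^+2 * z^+2 + y^+2 * z^+2)
  + c%:~R * x * y * z
  + d%:~R * (x^+2 + y^+2 + z^+2)
  + e%:~R.

(* The (2,2,2)-bihomogenization on (P^1)^3 with coordinates
   ([x:r],[y:s],[z:t]). *)
Definition bihomF (R : comNzRingType) (a b c d e : int) (x r y s z t : R) : R :=
  a%:~R * x^+2 * y^+2 * z^+2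
  + b%:~R * (x^+2 * y^+2 * t^+2 + x^+2 * s^+2 * z^+2 + r^+2 * y^+2 * z^+2)
  + c%:~R * x * y * z * r * s * t
  + d%:~R * (x^+2 * s^+2 * t^+2 + r^+2 * y^+2 * t^+2 + r^+2 * s^+2 * z^+2)
  + e%:~R * r^+2 * s^+2 * t^+2.

Definition dFx (R : comNzRingType) (a b c d e : int) (x r y s z t : R) : R :=
  2%:R * a%:~R * x * y^+2 * z^+2
  + 2%:R * b%:~R * (x * y^+2 * t^+2 + x * s^+2 * z^+2)
  + c%:~R * y * z * r * s * t
  + 2%:R * d%:~R * x * s^+2 * t^+2.
Definition dFr (R : comNzRingType) (a b c d e : int) (x r y s z t : R) : R :=
  2%:R * b%:~R * r * y^+2 * z^+2
  + c%:~R * x * y * z * s * t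
  + 2%:R * d%:~R * (r * y^+2 * t^+2 + r * s^+2 * z^+2)
  + 2%:R * e%:~R * r * s^+2 * t^+2.
Definition dFy (R : comNzRingType) (a b c d e : int) (x r y s z t : R) : R :=
  2%:R * a%:~R * x^+2 * y * z^+2
  + 2%:R * b%:~R * (x^+2 * y * t^+2 + r^+2 * y * z^+2)
  + c%:~R * x * z * r * s * t
  + 2%:R * d%:~R * r^+2 * y * t^+2.
Definition dFs (R : comNzRingType) (a b c d e : int) (x r y s z t : R) : R :=
  2%:R * b%:~R * x^+2 * s * z^+2
  + c%:~R * x * y * z * r * t
  + 2%:R * d%:~R * (x^+2 * s * t^+2 + r^+2 * s * z^+2)
  + 2%:R * e%:~R * r^+2 * s * t^+2.
Definition dFz (R : comNzRingType) (a b c d e : int) (x r y s z t : R) : R :=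
  2%:R * a%:~R * x^+2 * y^+2 * z
  + 2%:R * b%:~R * (x^+2 * s^+2 * z + r^+2 * y^+2 * z)
  + c%:~R * x * y * r * s * t
  + 2%:R * d%:~R * r^+2 * s^+2 * z.
Definition dFt (R : comNzRingType) (a b c d e : int) (x r y s z t : R) : R :=
  2%:R * b%:~R * x^+2 * y^+2 * t
  + c%:~R * x * y * z * r * s
  + 2%:R * d%:~R * (x^+2 * s^+2 * t + r^+2 * y^+2 * t)
  + 2%:R * e%:~R * r^+2 * s^+2 * t.

Definition smoothW (a b c d e : int) : Prop :=
  forall x r y s z t : algC,
    (x != 0) || (r != 0) -> (y != 0) || (s != 0) -> (z != 0) || (t != 0) ->
    bihomF a b c d e x r y s z t = 0 ->
    ~ (dFx a b c d e x r y s z t = 0 /\ dFr a b c d e x r y s z t = 0 /\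
       dFy a b c d e x r y s z t = 0 /\ dFs a b c d e x r y s z t = 0 /\
       dFz a b c d e x r y s z t = 0 /\ dFt a b c d e x r y s z t = 0).

Definition nondegW (a b c d e : int) : Prop :=
  [/\ c != 0, b * e != d ^+ 2 & a * d != b ^+ 2].

Definition intPoint (a b c d e : int) (x y z : int) : Prop :=
  affF a b c d e x y z = 0.

Definition pt3 (R : Type) (x y z : R) : 'I_3 -> R :=
  fun i => match val i with 0%N => x | 1%N => y | _ => z end.

(* The set of integer points is NOT Zariski-dense in U (= the affine surface
   affF = 0 in A^3_Q, i.e. W minus {rst = 0}): some polynomial over Q vanishes
   at all integer points but not identically on U (i.e. is nonzero at some
   geometric point of U). *)
Definition int_points_not_dense (a b c d e : int) : Prop :=
  exists g : {mpoly rat[3]},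
    (forall x y z : int, intPoint a b c d e x y z ->
        g.@[pt3 (x%:~R) (y%:~R) (z%:~R)] = 0)
    /\ exists x y z : algC, affF a b c d e x y z = 0 /\
        (map_mpoly (ratr : rat -> algC) g).@[pt3 x y z] != 0.

(* Main.v *)
Require Import Defs.
From HB Require Import structures.
From mathcomp Require Import all_boot all_order all_algebra all_field.
From mathcomp Require Import mpoly.
From mathcomp Require Import zify ring lra.
Import Order.TTheory GRing.Theory Num.Theory.
Local Open Scope ring_scope.
Set Implicit Arguments. Unset Strict Implicit.

Lemma h_sq (L u : int) : 1 <= L -> L <= u -> L * L <= u * u.
Proof. move=> *; nia. Qed.
Lemma h_cube (L u v w : int) : 1 <= L -> L <= u -> L <= v -> L <= w -> L * L <= u * v * w.
Proof.
move=> hL hu hv hw.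
have h1 : L * L <= u * v by apply: ler_pM; nia.
have h2 : 0 <= u * v by nia.
nia.
Qed.
Lemma h_one (L u : int) : 1 <= L -> L <= u -> 1 <= u * u.
Proof. move=> *; nia. Qed.
Lemma h_mulge (L T S : int) : L * L <= T -> 0 <= S -> L * L * S <= T * S.
Proof. move=> *; nia. Qed.
Lemma h_final (a L P R Q : int) : 1 <= `|a| -> 0 < P -> `|a| * P = Q -> Q <= R ->
  L * L * R <= (L - 1) * P -> 1 <= L -> False.
Proof.
move=> ha hP hQ hR hf hL.
have h1 : P <= R by nia.
have h2 : L * L * P <= L * L * R by apply: ler_wpM2l; nia.
have h3 : 0 < L * L - (L - 1) by nia.
have h4 : 0 < (L * L - (L - 1)) * P by nia.
nia.
Qed.

Lemma smallcoord (a b c d e x y z : int) : a != 0 -> affF a b c d e x y z = 0 ->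
  `|x| < 3 * `|b| + `|c| + 3 * `|d| + `|e| + 1 \/
  `|y| < 3 * `|b| + `|c| + 3 * `|d| + `|e| + 1 \/
  `|z| < 3 * `|b| + `|c| + 3 * `|d| + `|e| + 1.
Proof.
move=> a0 h.
set L := 3 * `|b| + `|c| + 3 * `|d| + `|e| + 1.
case: (ltrP `|x| L) => hx; first by left.
case: (ltrP `|y| L) => hy; first by right; left.
case: (ltrP `|z| L) => hz; first by right; right.
exfalso.
move: h; rewrite /affF !intz => h.
have L1 : 1 <= L.
  by rewrite /L lerDr !addr_ge0 ?mulr_ge0 ?normr_ge0.
have ha : 1 <= `|a| by move: a0; clear; lia.
have ex2 : x^+2 = `|x| * `|x| by rewrite -normrM -expr2 ger0_norm ?sqr_ge0.
have ey2 : y^+2 = `|y| * `|y| by rewrite -normrM -expr2 ger0_norm ?sqr_ge0.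
have ez2 : z^+2 = `|z| * `|z| by rewrite -normrM -expr2 ger0_norm ?sqr_ge0.
have x0 : 0 <= `|x| by apply: normr_ge0.
have y0 : 0 <= `|y| by apply: normr_ge0.
have z0 : 0 <= `|z| by apply: normr_ge0.
have sx := h_sq L1 hx; have sy := h_sq L1 hy; have sz := h_sq L1 hz.
have [P eP] : {P : int | P = `|x| * `|x| * (`|y| * `|y|) * (`|z| * `|z|)} by eexists.
have f1 : L * L * (`|x| * `|x| * (`|y| * `|y|)) <= P.
  have -> : P = (`|z| * `|z|) * (`|x| * `|x| * (`|y| * `|y|)) by rewrite eP; ring.
  by apply: h_mulge => //; rewrite !mulr_ge0.
have f2 : L * L * (`|x| * `|x| * (`|z| * `|z|)) <= P.
  have -> : P = (`|y| * `|y|) * (`|x| * `|x| * (`|z| * `|z|)) by rewrite eP; ring.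
  by apply: h_mulge => //; rewrite !mulr_ge0.
have f3 : L * L * (`|y| * `|y| * (`|z| * `|z|)) <= P.
  have -> : P = (`|x| * `|x|) * (`|y| * `|y| * (`|z| * `|z|)) by rewrite eP; ring.
  by apply: h_mulge => //; rewrite !mulr_ge0.
have f4 : L * L * (`|x| * `|y| * `|z|) <= P.
  have -> : P = (`|x| * `|y| * `|z|) * (`|x| * `|y| * `|z|) by rewrite eP; ring.
  by apply: h_mulge; [apply: h_cube|rewrite !mulr_ge0].
have f5 : L * L * (`|x| * `|x|) <= P.
  have -> : P = (`|y| * `|y| * (`|z| * `|z|)) * (`|x| * `|x|) by rewrite eP; ring.
  apply: h_mulge; last by rewrite !mulr_ge0.
  apply: (le_trans sy); rewrite ler_peMr ?mulr_ge0 //; exact: h_one L1 hz.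
have f6 : L * L * (`|y| * `|y|) <= P.
  have -> : P = (`|x| * `|x| * (`|z| * `|z|)) * (`|y| * `|y|) by rewrite eP; ring.
  apply: h_mulge; last by rewrite !mulr_ge0.
  apply: (le_trans sx); rewrite ler_peMr ?mulr_ge0 //; exact: h_one L1 hz.
have f7 : L * L * (`|z| * `|z|) <= P.
  have -> : P = (`|x| * `|x| * (`|y| * `|y|)) * (`|z| * `|z|) by rewrite eP; ring.
  apply: h_mulge; last by rewrite !mulr_ge0.
  apply: (le_trans sx); rewrite ler_peMr ?mulr_ge0 //; exact: h_one L1 hy.
have f8 : L * L <= P.
  apply: le_trans f7; rewrite ler_peMr ?mulr_ge0 //; exact: h_one L1 hz.
have Ppos : 0 < P.
  apply: lt_le_trans f8; rewrite mulr_gt0 //; apply: lt_le_trans L1 => //.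
have eq2 : a * P = - (b * (x^+2 * y^+2 + x^+2 * z^+2 + y^+2 * z^+2) + c * x * y * z + d * (x^+2 + y^+2 + z^+2) + e).
  apply/eqP; rewrite -subr_eq0 opprK -h; apply/eqP; rewrite ex2 ey2 ez2 eP; ring.
have eq : `|a| * P = `|b * (x^+2 * y^+2 + x^+2 * z^+2 + y^+2 * z^+2) + c * x * y * z + d * (x^+2 + y^+2 + z^+2) + e|.
  by have := congr1 Num.norm eq2; rewrite normrN normrM (ger0_norm (ltW Ppos)).
have tri : `|b * (x^+2 * y^+2 + x^+2 * z^+2 + y^+2 * z^+2) + c * x * y * z + d * (x^+2 + y^+2 + z^+2) + e|
   <= `|b| * (`|x|*`|x|*(`|y|*`|y|) + `|x|*`|x|*(`|z|*`|z|) + `|y|*`|y|*(`|z|*`|z|)) + `|c| * (`|x|*`|y|*`|z|) + `|d| * (`|x|*`|x|+`|y|*`|y|+`|z|*`|z|) + `|e|.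
  apply: (le_trans (ler_normD _ _)); apply: lerD; last by [].
  apply: (le_trans (ler_normD _ _)); apply: lerD; last first.
    by rewrite normrM ex2 ey2 ez2 (ger0_norm (x := _ + _ + _)) // !addr_ge0 ?mulr_ge0.
  apply: (le_trans (ler_normD _ _)); apply: lerD; last first.
    by rewrite !normrM !mulrA.
  by rewrite normrM ex2 ey2 ez2 (ger0_norm (x := _ + _ + _)) // !addr_ge0 ?mulr_ge0.
have fin : L * L * (`|b| * (`|x|*`|x|*(`|y|*`|y|) + `|x|*`|x|*(`|z|*`|z|) + `|y|*`|y|*(`|z|*`|z|)) + `|c| * (`|x|*`|y|*`|z|) + `|d| * (`|x|*`|x|+`|y|*`|y|+`|z|*`|z|) + `|e|) <= (L - 1) * P.
  have -> : L * L * (`|b| * (`|x|*`|x|*(`|y|*`|y|) + `|x|*`|x|*(`|z|*`|z|) + `|y|*`|y|*(`|z|*`|z|)) + `|c| * (`|x|*`|y|*`|z|) + `|d| * (`|x|*`|x|+`|y|*`|y|+`|z|*`|z|) + `|e|)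
    = `|b| * (L * L * (`|x|*`|x|*(`|y|*`|y|))) + `|b| * (L * L * (`|x|*`|x|*(`|z|*`|z|))) + `|b| * (L * L * (`|y|*`|y|*(`|z|*`|z|)))
      + `|c| * (L * L * (`|x|*`|y|*`|z|)) + `|d| * (L * L * (`|x|*`|x|)) + `|d| * (L * L * (`|y|*`|y|)) + `|d| * (L * L * (`|z|*`|z|))
      + `|e| * (L * L) by ring.
  have -> : (L - 1) * P = `|b| * P + `|b| * P + `|b| * P + `|c| * P + `|d| * P + `|d| * P + `|d| * P + `|e| * P
    by rewrite /L; ring.
  by rewrite !lerD ?ler_wpM2l ?normr_ge0.
exact: h_final ha Ppos eq tri fin L1.
Qed.

Definition i0 : 'I_3 := @Ordinal 3 0 isT.
Definition i1 : 'I_3 := @Ordinal 3 1 isT.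
Definition i2 : 'I_3 := @Ordinal 3 2 isT.
Definition kq (L : int) (i : nat) : int := i%:Z - L.
Definition gpol (L : int) : {mpoly rat[3]} :=
  \prod_(i < (`|L| * 2)%N) (('X_i0 - ((kq L i)%:~R)%:MP) * ('X_i1 - ((kq L i)%:~R)%:MP) * ('X_i2 - ((kq L i)%:~R)%:MP)).

Lemma gpol_eval L (v : 'I_3 -> rat) : (gpol L).@[v] =
  \prod_(i < (`|L| * 2)%N) ((v i0 - (kq L i)%:~R) * (v i1 - (kq L i)%:~R) * (v i2 - (kq L i)%:~R)).
Proof.
rewrite /gpol rmorph_prod; apply: eq_bigr => i _.
by rewrite !rmorphM !rmorphB /= !mevalXU !mevalC.
Qed.

Lemma gpol_map_eval L (v : 'I_3 -> algC) : (map_mpoly (ratr : rat -> algC) (gpol L)).@[v] =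
  \prod_(i < (`|L| * 2)%N) ((v i0 - (kq L i)%:~R) * (v i1 - (kq L i)%:~R) * (v i2 - (kq L i)%:~R)).
Proof.
rewrite /gpol !rmorph_prod; apply: eq_bigr => i _.
rewrite !rmorphM !rmorphB /= !map_mpolyC !map_mpolyX !mevalXU !mevalC.
by congr (_ * _ * _); congr (_ - (_ - _)); apply: ratr_int.
Qed.

Lemma affF_int a b c d e (x y z : int) :
  affF a b c d e (x%:~R : algC) y%:~R z%:~R = (affF a b c d e x y z)%:~R.
Proof. by rewrite /affF !intz !(intrD, intrM, rmorphXn). Qed.

Lemma quart (al be ga N M : int) : al != 0 -> `|be| + `|ga| <= M -> M < N -> 1 <= N ->
  al * (N*N*(N*N)) + be * (N*N) + ga != 0.
Proof.
move=> ha hM hN h1.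
have hal : 1 <= `|al| by move: ha; clear; lia.
have q1 : M < N * N by nia.
have q2 : N * N * (`|be| + `|ga|) < N * N * (N * N) by nia.
have q3 : `|be * (N * N) + ga| <= N * N * (`|be| + `|ga|).
  apply: (le_trans (ler_normD _ _)); rewrite normrM (ger0_norm (x := N * N)) ?mulr_ge0 //; try nia.
have q4 : N * N * (N * N) <= `|al * (N * N * (N * N))|.
  rewrite normrM (ger0_norm (x := _ * _)) ?mulr_ge0 //; try nia.
apply/eqP => h.
have : al * (N * N * (N * N)) = - (be * (N * N) + ga).
  by apply/eqP; rewrite -subr_eq0 opprK -h; apply/eqP; ring.
move/(congr1 Num.norm); rewrite normrN => h5.
move: q3 q4 q2; rewrite h5; clear; lia.
Qed.

Lemma bnd (b c d e k L : int) : `|k| <= L ->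
  `|2*b*k^+2 + c*k + 2*d| + `|d*k^+2+e| <= 2*`|b|*(L*L) + `|c|*L + 2*`|d| + `|d|*(L*L) + `|e|.
Proof.
move=> hk.
have k0 : 0 <= `|k| by [].
have hk2 : `|k ^+ 2| <= L * L by rewrite normrX expr2; apply: ler_pM.
have t1 : `|2*b*k^+2 + c*k + 2*d| <= 2*`|b|*(L*L) + `|c|*L + 2*`|d|.
  apply: (le_trans (ler_normD _ _)); apply: lerD; last by rewrite normrM.
  apply: (le_trans (ler_normD _ _)); apply: lerD.
    rewrite !normrM (ger0_norm (x := 2)) //.
    apply: ler_wpM2l; first by rewrite mulr_ge0.
    by apply: ler_pM.
  by rewrite normrM ler_wpM2l.
have t2 : `|d*k^+2+e| <= `|d|*(L*L) + `|e|.
  apply: (le_trans (ler_normD _ _)); apply: lerD => //.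
  by rewrite normrM ler_wpM2l.
move: t1 t2; clear; lia.
Qed.

Lemma alpha_ne0 (a b k : int) : (a == 0 %[mod 7])%Z -> (b == -1 %[mod 7])%Z -> a * k^+2 + b != 0.
Proof.
move=> ha hb; apply/eqP => h.
have e1 : b = - (a * k^+2) by apply/eqP; rewrite -subr_eq0 opprK addrC h.
move/eqP: ha; rewrite mod0z => /dvdz_mod0P ha.
have : (7 %| b)%Z by rewrite e1 -mulrN dvdz_mulr.
move/dvdz_mod0P; move/eqP: hb => ->.
by [].
Qed.

Lemma affF_NNk a b c d e (N k : int) : affF a b c d e N N k =
  (a*k^+2 + b) * (N*N*(N*N)) + (2*b*k^+2 + c*k + 2*d)*(N*N) + (d*k^+2+e).
Proof. rewrite /affF !intz; ring. Qed.

Lemma quad_root (A B C : algC) : A != 0 ->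
  A * ((-B + sqrtC (B^+2 - 4*A*C)) / (2*A))^+2 + B * ((-B + sqrtC (B^+2 - 4*A*C)) / (2*A)) + C = 0.
Proof.
move=> hA.
set s := sqrtC _.
have hs : s ^+ 2 = B^+2 - 4*A*C by rewrite /s sqrtCK.
have h2 : (2 : algC) != 0 by rewrite pnatr_eq0.
have -> : A * ((-B + s) / (2*A))^+2 + B * ((-B + s) / (2*A)) + C = (s^+2 - (B^+2 - 4*A*C)) / (4 * A).
  by field.
by rewrite hs subrr mul0r.
Qed.

Lemma affF_quad a b c d e (N : int) (z : algC) : affF a b c d e N%:~R N%:~R z =
  (a*(N*N*(N*N)) + 2*b*(N*N) + d)%:~R * z^+2 + (c*(N*N))%:~R * z + (b*(N*N*(N*N)) + 2*d*(N*N) + e)%:~R.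
Proof. rewrite /affF !(intrD, intrM); ring. Qed.

Lemma bndA (b c d e L : int) : 1 <= L ->
  `|2*b| + `|d| <= 2*`|b|*(L*L) + `|c|*L + 2*`|d| + `|d|*(L*L) + `|e|.
Proof.
move=> hL; rewrite normrM (ger0_norm (x := 2)) //.
have h1 : 1 <= L * L by nia.
have hb : 0 <= `|b| by []. have hc : 0 <= `|c| by []. have hd : 0 <= `|d| by []. have he : 0 <= `|e| by [].
nia.
Qed.

Lemma witness a b c d e (L : int) : a != 0 -> (a == 0 %[mod 7])%Z -> (b == -1 %[mod 7])%Z -> 1 <= L ->
  exists x y z : algC, affF a b c d e x y z = 0 /\
   (forall k : int, `|k| <= L -> (x != k%:~R) && (y != k%:~R) && (z != k%:~R)).
Proof.
move=> a0 ha hb hL.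
have [M eM] : {M : int | M = 2*`|b|*(L*L) + `|c|*L + 2*`|d| + `|d|*(L*L) + `|e|} by eexists.
have M0 : 0 <= M by rewrite eM !addr_ge0 ?mulr_ge0 // (le_trans _ hL).
have [N eN] : {N : int | N = L + M + 1} by eexists.
have hMN : M < N by rewrite eN; move: hL M0; clear; lia.
have hN1 : 1 <= N by rewrite eN; move: hL M0; clear; lia.
have hLN : L < N by rewrite eN; move: hL M0; clear; lia.
have hA : a*(N*N*(N*N)) + 2*b*(N*N) + d != 0.
  by apply: (quart a0 _ hMN hN1); rewrite eM; apply: bndA.
set A := (a*(N*N*(N*N)) + 2*b*(N*N) + d)%:~R : algC.
set B := (c*(N*N))%:~R : algC.
set C := (b*(N*N*(N*N)) + 2*d*(N*N) + e)%:~R : algC.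
have hA' : A != 0 by rewrite /A intr_eq0.
exists N%:~R, N%:~R, ((- B + sqrtC (B^+2 - 4*A*C)) / (2*A)).
split; first by rewrite affF_quad -/A -/B -/C; apply: quad_root.
move=> k hk.
have hNk : (N%:~R : algC) != k%:~R.
  rewrite eqr_int; apply/eqP => E; move: hk hLN; rewrite E; clear; lia.
rewrite hNk /=; apply/eqP => hz.
have h0 : affF a b c d e (N%:~R : algC) N%:~R k%:~R = 0.
  by rewrite affF_quad -/A -/B -/C -hz; apply: quad_root.
move/eqP: h0; rewrite affF_int intr_eq0 affF_NNk; apply/negP.
apply: (quart (alpha_ne0 k ha hb) _ hMN hN1).
by rewrite eM; apply: bnd.
Qed.

Unset Implicit Arguments.

Theorem proposition6p1 (a b c d e : int) :
  a != 0 -> b != 0 -> c != 0 -> d != 0 -> e != 0 ->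
  (a == 0 %[mod 7])%Z -> (b == -1 %[mod 7])%Z ->
  (c == 1 %[mod 7])%Z -> (d == 1 %[mod 7])%Z -> (e == 4 %[mod 7])%Z ->
  smoothW a b c d e -> nondegW a b c d e ->
  int_points_not_dense a b c d e.
Proof.
move=> a0 _ _ _ _ ha hb _ _ _ _ _.
have [L eL] : {L : int | L = 3 * `|b| + `|c| + 3 * `|d| + `|e| + 1} by eexists.
have hL : 1 <= L by rewrite eL lerDr !addr_ge0 ?mulr_ge0 ?normr_ge0.
exists (gpol L); split.
  move=> x y z hp; rewrite gpol_eval; apply/eqP/prodf_eq0.
  have := smallcoord a0 hp; rewrite -eL => -[hx|[hx|hx]].
  - have hi : (absz (x + L)%R < absz L * 2)%N by move: hx hL; clear; lia.
    exists (Ordinal hi) => //=.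
    rewrite /kq /= gez0_abs; last by move: hx; clear; lia.
    by rewrite addrK subrr !mul0r.
  - have hi : (absz (y + L)%R < absz L * 2)%N by move: hx hL; clear; lia.
    exists (Ordinal hi) => //=.
    rewrite /kq /= gez0_abs; last by move: hx; clear; lia.
    by rewrite addrK subrr mulr0 mul0r.
  - have hi : (absz (z + L)%R < absz L * 2)%N by move: hx hL; clear; lia.
    exists (Ordinal hi) => //=.
    rewrite /kq /= gez0_abs; last by move: hx; clear; lia.
    by rewrite addrK subrr mulr0.
have [X [Y [Z [h1 h2]]]] := witness c d e a0 ha hb hL.
exists X, Y, Z; split => //.
rewrite gpol_map_eval; apply/prodf_neq0 => i _.
have hk : `|kq L i| <= L.
  rewrite /kq; move: (ltn_ord i) hL; clear; lia.
move: (h2 _ hk) => /andP [/andP [n1 n2] n3].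
by rewrite /pt3 /= !mulf_neq0 // subr_eq0.
Qed.
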